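(* Let $n\ge1$, let $\mu_n$ be a finite positive regular Borel measure on a compact set, $\phi_n,\phi^n_{ij}\in L^\infty(\mu_n)$ for $1\le i<j\le n$, and let $A_n$ be the operator on $L^2(\mu_n)^{(n)}$ given by the upper triangular $n\times n$ operator matrix with all diagonal entries $M_{\phi_n}$ and $(i,j)$ entry $M_{\phi^n_{ij}}$ for $i<j$, and suppose $A_n$ is a direct integral of strongly irreducible operators. If $M_{\phi^n_{i,i+1}}$ is invertible in $\mathscr{L}(L^2(\mu_n))$ for each $i=1,\dots,n-1$, then there is an invertible operator $X_n\in\mathscr{L}(L^2(\mu_n)^{(n)})$ such that $X_nA_nX_n^{-1}$ is the $n\times n$ operator matrix with all diagonal entries $M_{\phi_n}$, all superdiagonal entries ($(i,i+1)$ entries) equal to the identity $I$, and all other entries $0$.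
   Context: $M_\phi$ denotes the multiplication operator $f\mapsto\phi f$ on $L^2(\mu_n)$. An operator is strongly irreducible if its commutant contains no idempotents other than $0$ and $I$; ''$A_n$ is a direct integral of strongly irreducible operators'' means the fibre matrix (upper triangular with diagonal $\phi_n(\lambda)$ and entries $\phi^n_{ij}(\lambda)$) is strongly irreducible for a.e. $\lambda$. *)

(* Defs.v *)
From HB Require Import structures.
From mathcomp Require Import all_boot all_order all_algebra.
From mathcomp Require Import all_classical all_reals all_analysis.
From mathcomp Require Import complex.
Set Implicit Arguments. Unset Strict Implicit. Unset Printing Implicit Defensive.
Import Order.TTheory GRing.Theory Num.Theory.
Import numFieldNormedType.Exports.
Local Open Scope classical_set_scope.
Local Open Scope ring_scope.

(* The underlying space: the complex plane, realised as R * R with its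
   (product = Borel) sigma-algebra and product topology. Scalars are R[i]. *)
Section Defs.
Variable R : realType.
Local Notation T := (R * R)%type.
Local Notation C := R[i].
Variable mu : {measure set T -> \bar R}.

Definition csq (z : C) : R := complex.Re z ^+ 2 + complex.Im z ^+ 2.

Definition cmeasurable (g : T -> C) : Prop :=
  measurable_fun setT (fun x => complex.Re (g x)) /\ measurable_fun setT (fun x => complex.Im (g x)).

Definition Linf (g : T -> C) : Prop :=
  cmeasurable g /\ exists M : R, {ae mu, forall x, csq (g x) <= M}.

(* elements (representatives) of L^2(mu)^(k) : k-tuples of functions *)
Definition vecfun (k : nat) := 'I_k -> T -> C.

Definition vsq k (F : vecfun k) (x : T) : R := \sum_(i < k) csq (F i x).

Definition L2vec k (F : vecfun k) : Prop :=
  (forall i, cmeasurable (F i)) /\ (\int[mu]_x (vsq F x)%:E < +oo)%E.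

Definition aeeq k (F G : vecfun k) : Prop :=
  {ae mu, forall x, forall i, F i x = G i x}.

(* X is (a representative of) an element of L(L^2(mu)^(k)) *)
Definition bounded_op k (X : vecfun k -> vecfun k) : Prop :=
  [/\ (forall F, L2vec F -> L2vec (X F)),
      (forall F G, L2vec F -> L2vec G -> aeeq F G -> aeeq (X F) (X G)),
      (forall (a : C) F G, L2vec F -> L2vec G ->
          aeeq (X (fun i x => a * F i x + G i x))
               (fun i x => a * X F i x + X G i x)) &
      exists c : R, forall F, L2vec F ->
          (\int[mu]_x (vsq (X F) x)%:E <= c%:E * \int[mu]_x (vsq F x)%:E)%E].

Definition is_inverse_op k (X Y : vecfun k -> vecfun k) : Prop :=
  [/\ bounded_op X, bounded_op Y,
      (forall F, L2vec F -> aeeq (Y (X F)) F) &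
      (forall F, L2vec F -> aeeq (X (Y F)) F)].

Definition invertible_op k (X : vecfun k -> vecfun k) : Prop :=
  exists Y, is_inverse_op X Y.

End Defs.

Section Ops.
Variable R : realType.
Local Notation T := (R * R)%type.
Local Notation C := R[i].

Definition sop := (T -> C) -> (T -> C).

Definition Mul (phi : T -> C) : sop := fun f x => phi x * f x.
Definition Iop : sop := id.
Definition Zop : sop := fun _ _ => 0.

(* an operator on L^2(mu) viewed as acting on L^2(mu)^(1) *)
Definition scal_op (S : sop) : vecfun R 1 -> vecfun R 1 := fun F i => S (F i).

Definition opmx k (E : 'I_k -> 'I_k -> sop) : vecfun R k -> vecfun R k :=
  fun F i x => \sum_(j < k) E i j (F j) x.

Definition Aop n (phi : T -> C) (phis : 'I_n -> 'I_n -> T -> C) :=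
  opmx (fun i j => if i == j then Mul phi
                   else if (i < j)%N then Mul (phis i j) else Zop).

Definition Jop n (phi : T -> C) :=
  opmx (fun i j : 'I_n => if i == j then Mul phi
                          else if (j == i.+1 :> nat) then Iop else Zop).

Definition fibre n (phi : T -> C) (phis : 'I_n -> 'I_n -> T -> C) (l : T)
  : 'M[C]_n :=
  \matrix_(i, j) (if i == j then phi l
                  else if (i < j)%N then phis i j l else 0).
End Ops.

Definition strongly_irreducible (F : fieldType) n (A : 'M[F]_n) : Prop :=
  forall P : 'M[F]_n, P *m P = P -> P *m A = A *m P -> P = 0 \/ P = 1%:M.

Definition regular_measure (R : realType) (mu : {measure set (R * R)%type -> \bar R}) : Prop :=
  forall A : set (R * R)%type, measurable A ->
    mu A = ereal_sup [set mu K | K in [set K | compact K /\ K `<=` A]] /\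
    mu A = ereal_inf [set mu U | U in [set U | open U /\ A `<=` U]].

(* Main.v *)
Require Import Defs.
From HB Require Import structures.
From mathcomp Require Import all_boot all_order all_algebra.
From mathcomp Require Import all_classical all_reals all_analysis.
From mathcomp Require Import complex.
From mathcomp Require Import ring lra.
Import Order.TTheory GRing.Theory Num.Theory.
Import numFieldNormedType.Exports.
Local Open Scope classical_set_scope.
Local Open Scope ring_scope.


Section Scal.
Context {R : realType}.
Local Notation C := R[i].
Lemma cReM (x y : C) : complex.Re (x * y) = complex.Re x * complex.Re y - complex.Im x * complex.Im y.
Proof. by case: x y => [a b] [c d]. Qed.
Lemma cImM (x y : C) : complex.Im (x * y) = complex.Re x * complex.Im y + complex.Im x * complex.Re y.
Proof. by case: x y => [a b] [c d]. Qed.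
Lemma cReD (x y : C) : complex.Re (x + y) = complex.Re x + complex.Re y.
Proof. by case: x y => [a b] [c d]. Qed.
Lemma cImD (x y : C) : complex.Im (x + y) = complex.Im x + complex.Im y.
Proof. by case: x y => [a b] [c d]. Qed.
Lemma cReN (x : C) : complex.Re (- x) = - complex.Re x.
Proof. by case: x. Qed.
Lemma cImN (x : C) : complex.Im (- x) = - complex.Im x.
Proof. by case: x. Qed.
Lemma cReV (x : C) : complex.Re (x^-1) = complex.Re x / csq x.
Proof. by case: x. Qed.
Lemma cImV (x : C) : complex.Im (x^-1) = - (complex.Im x / csq x).
Proof. by case: x. Qed.
Lemma csqM (x y : C) : csq (x * y) = csq x * csq y.
Proof. rewrite /csq cReM cImM; ring. Qed.
Lemma csq_ge0 (x : C) : 0 <= csq x.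
Proof. rewrite /csq; nra. Qed.
Lemma csqD (x y : C) : csq (x + y) <= 2 * csq x + 2 * csq y.
Proof. rewrite /csq cReD cImD.
have h1 := sqr_ge0 (complex.Re x - complex.Re y).
have h2 := sqr_ge0 (complex.Im x - complex.Im y). nra. Qed.
Lemma csqN (x : C) : csq (- x) = csq x.
Proof. by rewrite /csq cReN cImN !sqrrN. Qed.
Lemma csqV (x : C) : csq (x^-1) = (csq x)^-1.
Proof.
rewrite /csq cReV cImV /csq sqrrN !expr_div_n -mulrDl.
set q := _ + _.
have [->|q0] := eqVneq q 0; first by rewrite invr0 mul0r.
by rewrite expr2 invfM mulrA mulfV // mul1r.
Qed.
Lemma csq_eq0 (x : C) : csq x = 0 -> x = 0.
Proof.
case: x => a b; rewrite /csq /= => h.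
have ha : a ^+ 2 = 0 by apply/eqP; rewrite eq_le sqr_ge0 andbT -h lerDl sqr_ge0.
have hb : b ^+ 2 = 0 by move: h; rewrite ha add0r.
by move/eqP: ha; rewrite sqrf_eq0 => /eqP ->; move/eqP: hb; rewrite sqrf_eq0 => /eqP ->.
Qed.
Lemma csq_sum (I : Type) (s : seq I) (z : I -> C) :
  csq (\sum_(i <- s) z i) <= 2 ^+ size s * \sum_(i <- s) csq (z i).
Proof.
elim: s => [|a s IH]; first by rewrite !big_nil /csq /= expr0n /= addr0 mulr0.
rewrite !big_cons /=.
have h1 := csqD (z a) (\sum_(i <- s) z i).
have h2 : 0 <= \sum_(i <- s) csq (z i) by apply: sumr_ge0 => i _; exact: csq_ge0.
have h3 : 1 <= 2 ^+ size s :> R by rewrite exprn_ege1 // ler1n.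
have h4 := csq_ge0 (z a).
rewrite exprS; nra.
Qed.
Lemma csq1 : csq (1 : C) = 1.
Proof. by rewrite /csq /= expr0n /= addr0 expr1n. Qed.
Lemma csq0 : csq (0 : C) = 0.
Proof. by rewrite /csq /= expr0n /= addr0. Qed.
End Scal.

Section Meas.
Variable R : realType.
Local Notation T := (R * R)%type.
Local Notation C := R[i].
Variable mu : {measure set T -> \bar R}.

Lemma cm_cst (c : C) : cmeasurable (fun _ : T => c).
Proof. by split; apply: measurable_cst. Qed.

Lemma cm_add (f g : T -> C) : cmeasurable f -> cmeasurable g ->
  cmeasurable (fun x => f x + g x).
Proof.
move=> [f1 f2] [g1 g2]; split.
- rewrite (_ : (fun x => _) = fun x => complex.Re (f x) + complex.Re (g x));
   last by apply/funext => x; rewrite cReD.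
  exact: measurable_realfun.measurable_funD.
- rewrite (_ : (fun x => _) = fun x => complex.Im (f x) + complex.Im (g x));
   last by apply/funext => x; rewrite cImD.
  exact: measurable_realfun.measurable_funD.
Qed.

Lemma cm_opp (f : T -> C) : cmeasurable f -> cmeasurable (fun x => - f x).
Proof.
move=> [f1 f2]; split.
- rewrite (_ : (fun x => _) = fun x => (-1) * complex.Re (f x));
   last by apply/funext => x; rewrite cReN mulN1r.
  by apply: measurable_realfun.measurable_funM => //; exact: measurable_cst.
- rewrite (_ : (fun x => _) = fun x => (-1) * complex.Im (f x));
   last by apply/funext => x; rewrite cImN mulN1r.
  by apply: measurable_realfun.measurable_funM => //; exact: measurable_cst.
Qed.

Lemma cm_mul (f g : T -> C) : cmeasurable f -> cmeasurable g ->
  cmeasurable (fun x => f x * g x).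
Proof.
move=> [f1 f2] [g1 g2]; split.
- rewrite (_ : (fun x => _) = fun x => complex.Re (f x) * complex.Re (g x)
     - complex.Im (f x) * complex.Im (g x)); last by apply/funext => x; rewrite cReM.
  by apply: measurable_realfun.measurable_funB; apply: measurable_realfun.measurable_funM.
- rewrite (_ : (fun x => _) = fun x => complex.Re (f x) * complex.Im (g x)
     + complex.Im (f x) * complex.Re (g x)); last by apply/funext => x; rewrite cImM.
  by apply: measurable_realfun.measurable_funD; apply: measurable_realfun.measurable_funM.
Qed.

Lemma cm_sum (I : Type) (s : seq I) (f : I -> T -> C) :
  (forall i, cmeasurable (f i)) -> cmeasurable (fun x => \sum_(i <- s) f i x).
Proof.
move=> hf; elim: s => [|a s IH].
  rewrite (_ : (fun x => _) = fun _ => 0); last by apply/funext => x; rewrite big_nil.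
  exact: cm_cst.
rewrite (_ : (fun x => _) = fun x => f a x + \sum_(i <- s) f i x);
  last by apply/funext => x; rewrite big_cons.
exact: cm_add.
Qed.

Lemma mcsq (f : T -> C) : cmeasurable f -> measurable_fun setT (fun x => csq (f x)).
Proof.
move=> [f1 f2]; rewrite /csq.
by apply: measurable_realfun.measurable_funD; apply: measurable_realfun.measurable_funX.
Qed.

Lemma cm_inv (f : T -> C) : cmeasurable f -> cmeasurable (fun x => (f x)^-1).
Proof.
move=> hf; have mi : measurable_fun setT (fun x => (csq (f x))^-1).
  rewrite (_ : (fun x => _) = fun x => powR (csq (f x)) (-1)).
    apply: (measurableT_comp (measurable_realfun.measurable_powR (-1))) => //. case: hf => f1 f2; rewrite /csq. by apply: measurable_realfun.measurable_funD; apply: measurable_realfun.measurable_funX.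
  by apply/funext => x; rewrite powR_inv1 // csq_ge0.
case: hf => f1 f2; split.
- rewrite (_ : (fun x => _) = fun x => complex.Re (f x) * (csq (f x))^-1);
   last by apply/funext => x; rewrite cReV.
  exact: measurable_realfun.measurable_funM.
- rewrite (_ : (fun x => _) = fun x => (-1) * (complex.Im (f x) * (csq (f x))^-1));
   last by apply/funext => x; rewrite cImV mulN1r.
  apply: measurable_realfun.measurable_funM; first exact: measurable_cst.
  exact: measurable_realfun.measurable_funM.
Qed.

Lemma mvsq k (F : vecfun R k) : (forall i, cmeasurable (F i)) ->
  measurable_fun setT (vsq F).
Proof.
move=> hF; rewrite /vsq.
by apply: measurable_sum => i; exact: mcsq.
Qed.

Lemma ae_forall_fin (I : finType) (P : I -> T -> Prop) :
  (forall i, {ae mu, forall x, P i x}) -> {ae mu, forall x, forall i, P i x}.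
Proof.
move=> hP.
have : {ae mu, forall x, forall n : nat, forall i : I, (enum_rank i : nat) = n -> P i x}.
  apply: ae_foralln => n.
  case: (pickP (fun i : I => (enum_rank i : nat) == n)) => [i0 /eqP Hi0 | none].
    apply: filterS (hP i0) => x Px i Hi.
    have -> : i = i0 by apply: enum_rank_inj; apply: val_inj; rewrite /= Hi Hi0.
    exact: Px.
  apply: aeW => x i Hi; move: (none i); by rewrite Hi eqxx.
apply: filterS => x H i; exact: (H _ i erefl).
Qed.

Lemma Linf_cst (c : C) : Linf mu (fun _ => c).
Proof. split; first exact: cm_cst. by exists (csq c); apply: aeW. Qed.

Lemma Linf_bound (f : T -> C) : Linf mu f ->
  exists M, 0 <= M /\ {ae mu, forall x, csq (f x) <= M}.
Proof.
move=> [_ [M hM]]; exists (Num.max M 0); split; first by rewrite le_max lexx orbT.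
apply: filterS hM => x h; by rewrite le_max h.
Qed.

Lemma Linf_add (f g : T -> C) : Linf mu f -> Linf mu g -> Linf mu (fun x => f x + g x).
Proof.
move=> hf hg; split; first by apply: cm_add; [case: hf|case: hg].
have [M1 [M10 h1]] := Linf_bound _ hf; have [M2 [M20 h2]] := Linf_bound _ hg.
exists (2 * M1 + 2 * M2); apply: filterS2 h1 h2 => x a b.
have := csqD (f x) (g x); lra.
Qed.

Lemma Linf_opp (f : T -> C) : Linf mu f -> Linf mu (fun x => - f x).
Proof.
move=> [hf [M h]]; split; first exact: cm_opp.
by exists M; apply: filterS h => x; rewrite csqN.
Qed.

Lemma Linf_mul (f g : T -> C) : Linf mu f -> Linf mu g -> Linf mu (fun x => f x * g x).
Proof.
move=> hf hg; split; first by apply: cm_mul; [case: hf|case: hg].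
have [M1 [M10 h1]] := Linf_bound _ hf; have [M2 [M20 h2]] := Linf_bound _ hg.
exists (M1 * M2); apply: filterS2 h1 h2 => x a b.
rewrite csqM; apply: ler_pM => //; exact: csq_ge0.
Qed.

Lemma Linf_sum (I : Type) (s : seq I) (f : I -> T -> C) :
  (forall i, Linf mu (f i)) -> Linf mu (fun x => \sum_(i <- s) f i x).
Proof.
move=> hf; elim: s => [|a s IH].
  rewrite (_ : (fun x => _) = fun _ => 0); last by apply/funext => x; rewrite big_nil.
  exact: Linf_cst.
rewrite (_ : (fun x => _) = fun x => f a x + \sum_(i <- s) f i x);
  last by apply/funext => x; rewrite big_cons.
exact: Linf_add.
Qed.

Lemma Linf_inv (f : T -> C) (c : R) : Linf mu f -> 0 < c ->
  {ae mu, forall x, c <= csq (f x)} -> Linf mu (fun x => (f x)^-1).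
Proof.
move=> [hf _] c0 hc; split; first exact: cm_inv.
exists c^-1; apply: filterS hc => x h; rewrite csqV.
by rewrite lef_pV2 // ?posrE // (lt_le_trans c0 h).
Qed.

End Meas.

Set Implicit Arguments. Unset Strict Implicit.

Section Ops2.
Variable R : realType.
Local Notation T := (R * R)%type.
Local Notation C := R[i].
Variable mu : {measure set T -> \bar R}.

Definition goodM k (Mf : T -> 'M[C]_k) := forall i j, Linf mu (fun x => Mf x i j).
Definition MO k (Mf : T -> 'M[C]_k) : vecfun R k -> vecfun R k :=
  opmx (fun i j => Mul (fun x => Mf x i j)).

Lemma vsq_ge0 k (F : vecfun R k) x : 0 <= vsq F x.
Proof. by apply: sumr_ge0 => i _; exact: csq_ge0. Qed.

Lemma int_le k (F G : vecfun R k) (K : R) : 0 <= K ->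
  (forall i, cmeasurable (F i)) -> (forall i, cmeasurable (G i)) ->
  {ae mu, forall x, vsq G x <= K * vsq F x} ->
  (\int[mu]_x (vsq G x)%:E <= K%:E * \int[mu]_x (vsq F x)%:E)%E.
Proof.
move=> K0 mF mG hle.
have -> : (K%:E * \int[mu]_x (vsq F x)%:E = \int[mu]_x (K * vsq F x)%:E)%E.
  rewrite -ge0_integralZl //; last by move=> x _; rewrite lee_fin vsq_ge0.
  by apply/measurable_realfun.measurable_EFinP; exact: mvsq.
apply: ae_ge0_le_integral => //.
- by move=> x _; rewrite lee_fin vsq_ge0.
- by apply/measurable_realfun.measurable_EFinP; exact: mvsq.
- by move=> x _; rewrite lee_fin mulr_ge0 // vsq_ge0.
- apply/measurable_realfun.measurable_EFinP.
  by apply: measurable_realfun.measurable_funM; [exact: measurable_cst|exact: mvsq].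
- by apply: filterS hle => x h _; rewrite lee_fin.
Qed.

Lemma goodM_bound k (Mf : T -> 'M[C]_k) : goodM Mf ->
  exists B, 0 <= B /\ {ae mu, forall x, forall i j, csq (Mf x i j) <= B}.
Proof.
move=> hM.
have hp : forall p : 'I_k * 'I_k, exists M, 0 <= M /\
    {ae mu, forall x, csq (Mf x p.1 p.2) <= M}.
  by move=> p; exact: Linf_bound (hM p.1 p.2).
have [Mb hMb] := boolp.choice hp.
exists (\sum_p Mb p); split; first by apply: sumr_ge0 => p _; case: (hMb p).
have : {ae mu, forall x, forall p : 'I_k * 'I_k, csq (Mf x p.1 p.2) <= Mb p}.
  by apply: ae_forall_fin => p; case: (hMb p).
apply: filterS => x h i j; apply: le_trans (h (i, j)) _.
rewrite (bigD1 (i, j)) //= lerDl; apply: sumr_ge0 => p _; by case: (hMb p).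
Qed.

Lemma MO_cm k (Mf : T -> 'M[C]_k) (F : vecfun R k) : goodM Mf ->
  (forall i, cmeasurable (F i)) -> forall i, cmeasurable (MO Mf F i).
Proof.
move=> hM hF i; rewrite /MO /opmx /Mul.
apply: cm_sum => j; apply: cm_mul => //; by case: (hM i j).
Qed.

Lemma MO_bounded k (Mf : T -> 'M[C]_k) : goodM Mf -> bounded_op mu (MO Mf).
Proof.
move=> hM; have [B [B0 hB]] := goodM_bound hM.
set s := size (index_enum 'I_k).
set K := \sum_(i < k) (2 ^+ s * B).
have K0 : 0 <= K by apply: sumr_ge0 => i _; rewrite mulr_ge0 // exprn_ge0.
have key : forall F : vecfun R k, {ae mu, forall x, vsq (MO Mf F) x <= K * vsq F x}.
  move=> F; apply: filterS hB => x hx.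
  rewrite /vsq /MO /opmx /Mul /K /= mulr_suml; apply: ler_sum => i _.
  apply: (le_trans (csq_sum _ (index_enum (ordinal k)) (fun j => Mf x i j * F j x))); rewrite -mulrA; apply: ler_wpM2l.
    by rewrite exprn_ge0.
  rewrite mulr_sumr; apply: ler_sum => j _; rewrite csqM.
  by apply: ler_wpM2r; [exact: csq_ge0|exact: hx].
split.
- move=> F [mF iF]; split; first exact: MO_cm.
  apply: le_lt_trans (int_le K0 mF (MO_cm hM mF) (key F)) _.
  by apply: lte_mul_pinfty => //; rewrite lee_fin.
- move=> F G _ _ h; apply: filterS h => x h i; rewrite /MO /opmx.
  by apply: eq_bigr => j _; rewrite /Mul h.
- move=> a F G _ _; apply: aeW => x i; rewrite /MO /opmx /Mul.
  rewrite mulr_sumr -big_split /=; apply: eq_bigr => j _; ring.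
- exists K => F [mF _]; exact: int_le K0 mF (MO_cm hM mF) (key F).
Qed.

Lemma MO_comp k (Mf Nf : T -> 'M[C]_k) (F : vecfun R k) :
  MO Mf (MO Nf F) = MO (fun x => Mf x *m Nf x) F.
Proof.
apply/funext => i; apply/funext => x; rewrite /MO /opmx /Mul /=.
under eq_bigr do rewrite mulr_sumr.
rewrite exchange_big /=; apply: eq_bigr => l _.
rewrite mxE mulr_suml; apply: eq_bigr => j _; by rewrite mulrA.
Qed.

Lemma MO_ae k (Mf Nf : T -> 'M[C]_k) (F : vecfun R k) :
  {ae mu, forall x, Mf x = Nf x} -> aeeq mu (MO Mf F) (MO Nf F).
Proof.
move=> h; apply: filterS h => x h i; rewrite /MO /opmx /Mul.
by apply: eq_bigr => j _; rewrite h.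
Qed.

Lemma MO_1 k (F : vecfun R k) : MO (fun _ => 1%:M) F = F.
Proof.
apply/funext => i; apply/funext => x; rewrite /MO /opmx /Mul.
rewrite (bigD1 i) //= big1 ?addr0; first by rewrite mxE eqxx mul1r.
by move=> j ji; rewrite mxE eq_sym (negbTE ji) mul0r.
Qed.

Lemma goodM_cst k (A : 'M[C]_k) : goodM (fun _ => A).
Proof. by move=> i j; exact: Linf_cst. Qed.

Lemma goodM_add k (Mf Nf : T -> 'M[C]_k) : goodM Mf -> goodM Nf ->
  goodM (fun x => Mf x + Nf x).
Proof.
move=> hM hN i j.
rewrite (_ : (fun x => _) = fun x => Mf x i j + Nf x i j); last first.
  by apply/funext => x; rewrite mxE.
exact: Linf_add.
Qed.

Lemma goodM_opp k (Mf : T -> 'M[C]_k) : goodM Mf -> goodM (fun x => - Mf x).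
Proof.
move=> hM i j.
rewrite (_ : (fun x => _) = fun x => - Mf x i j); last first.
  by apply/funext => x; rewrite mxE.
exact: Linf_opp.
Qed.

Lemma goodM_mul k (Mf Nf : T -> 'M[C]_k) : goodM Mf -> goodM Nf ->
  goodM (fun x => Mf x *m Nf x).
Proof.
move=> hM hN i j.
rewrite (_ : (fun x => _) = fun x => \sum_l Mf x i l * Nf x l j); last first.
  by apply/funext => x; rewrite mxE.
apply: Linf_sum => l; exact: Linf_mul.
Qed.

Lemma goodM_sum k (I : Type) (r : seq I) (Mf : I -> T -> 'M[C]_k) :
  (forall l, goodM (Mf l)) -> goodM (fun x => \sum_(l <- r) Mf l x).
Proof.
move=> hM i j.
rewrite (_ : (fun x => _) = fun x => \sum_(l <- r) Mf l x i j); last first.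
  by apply/funext => x; rewrite summxE.
apply: Linf_sum => l; exact: hM.
Qed.

Lemma goodM_exp m (Mf : T -> 'M[C]_m.+1) n : goodM Mf -> goodM (fun x => Mf x ^+ n).
Proof.
move=> hM; elim: n => [|n IH].
  rewrite (_ : (fun x => _) = fun _ => 1); last by apply/funext => x; rewrite expr0.
  exact: goodM_cst.
rewrite (_ : (fun x => _) = fun x => Mf x ^+ n *m Mf x); last first.
  by apply/funext => x; rewrite exprSr mulmxE.
exact: goodM_mul.
Qed.

Lemma goodM_entries k (e : 'I_k -> 'I_k -> T -> C) : (forall i j, Linf mu (e i j)) ->
  goodM (fun x => \matrix_(i, j) e i j x).
Proof.
move=> he i j; rewrite (_ : (fun x => _) = e i j); first exact: he.
by apply/funext => x; rewrite mxE.
Qed.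

End Ops2.

Section Mx.
Variable F : fieldType.
Variable m : nat.
Local Notation n := m.+1.

Definition supp (N : 'M[F]_n) := forall i j : 'I_n, (j <= i)%N -> N i j = 0.

Lemma mulE (A B : 'M[F]_n) i j : (A * B) i j = \sum_l A i l * B l j.
Proof. by rewrite -mulmxE mxE. Qed.

Lemma oneE i j : (1 : 'M[F]_n) i j = (i == j)%:R.
Proof. by rewrite mxE. Qed.

Lemma pow_zero (N : 'M[F]_n) : supp N -> forall k (i j : 'I_n), (j < i + k)%N -> (N ^+ k) i j = 0.
Proof.
move=> hN; elim=> [|k IH] i j hj.
  rewrite expr0 oneE; move: hj; rewrite addn0 => hj.
  by rewrite (_ : (i == j) = false) //; apply/eqP => e; move: hj; rewrite e ltnn.
rewrite exprSr mulE big1 // => l _.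
case: (ltnP l (i + k)) => hl; first by rewrite IH // mul0r.
by rewrite hN ?mulr0 //; move: hj hl; rewrite addnS ltnS; exact: leq_trans.
Qed.

Lemma pow_diag (N : 'M[F]_n) : supp N -> forall k (i j : 'I_n), (j : nat) = (i + k)%N ->
  (N ^+ k) i j = \prod_(l < k) N (inord (i + l)) (inord (i + l).+1).
Proof.
move=> hN; elim=> [|k IH] i j hj.
  rewrite expr0 oneE big_ord0 (_ : i == j) //; apply/eqP/val_inj; by rewrite /= hj addn0.
have hik : (i + k < n)%N by rewrite -ltnS -addnS -hj ltnS ltnW.
rewrite exprSr mulE (bigD1 (Ordinal hik)) //= big1 ?addr0.
  rewrite IH // big_ord_recr /=; congr (_ * _); congr (N _ _); apply/val_inj.
    by rewrite /= inordK.
  by rewrite /= inordK ?hj ?addnS // -addnS -hj.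
move=> l hl.
case: (ltnP l (i + k)) => hl2; first by rewrite pow_zero // mul0r.
rewrite hN ?mulr0 //; rewrite hj addnS.
have : (l : nat) != (i + k)%N by apply: contra hl => /eqP e; apply/eqP/val_inj.
by rewrite neq_ltn ltnNge hl2 /=.
Qed.

Definition Xm (N : 'M[F]_n) : 'M[F]_n := \matrix_(i, j) (N ^+ i) 0 j.
Definition dg (N : 'M[F]_n) (i : 'I_n) := Xm N i i.
Definition Dinv (N : 'M[F]_n) : 'M[F]_n := diag_mx (\row_i (dg N i)^-1).
Definition Lm (N : 'M[F]_n) : 'M[F]_n := 1 - Dinv N * Xm N.
Definition Ym (N : 'M[F]_n) : 'M[F]_n := (\sum_(k < n) Lm N ^+ k) * Dinv N.
Definition Em : 'M[F]_n := \matrix_(i, j) ((j : nat) == i.+1)%:R.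

Lemma geom (L : 'M[F]_n) p : (\sum_(k < p) L ^+ k) * (1 - L) = 1 - L ^+ p.
Proof.
elim: p => [|p IH]; first by rewrite big_ord0 mul0r expr0 subrr.
by rewrite big_ord_recr /= mulrDl IH mulrBr mulr1 -exprSr addrA subrK.
Qed.

Lemma main_alg (N : 'M[F]_n) (hN : supp N)
  (hs : forall i : 'I_n, (i < m)%N -> N i (inord i.+1) != 0) (c : F) :
  Xm N * Ym N = 1 /\ Xm N * (c%:M + N) * Ym N = c%:M + Em.
Proof.
have dgE : forall i, dg N i = \prod_(l < i) N (inord (0 + l)) (inord (0 + l).+1).
  by move=> i; rewrite /dg /Xm mxE pow_diag.
have dg0 : forall i, dg N i != 0.
  move=> i; rewrite dgE; apply/prodf_neq0 => l _.
  have hl : (l < m)%N by apply: leq_trans (ltn_ord l) _; rewrite -ltnS.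
  have := hs (inord l); rewrite inordK; last by rewrite ltnS ltnW.
  by move=> /(_ hl); rewrite add0n.
have Xlow : forall i j : 'I_n, (j < i)%N -> Xm N i j = 0.
  by move=> i j hij; rewrite /Xm mxE pow_zero.
have Lsupp : supp (Lm N).
  move=> i j hij; rewrite /Lm -mulmxE mul_diag_mx !mxE.
  case: (ltngtP j i) hij => // [hji|/val_inj ->] _.
    rewrite pow_zero ?add0n // mulr0 subr0; case: eqP => // e; move: hji; by rewrite e ltnn.
  have e : (N ^+ i) 0 i = dg N i by rewrite /dg /Xm mxE.
  by rewrite eqxx e mulVf ?subrr // dg0.
have Lnil : Lm N ^+ n = 0.
  by apply/matrixP => i j; rewrite mxE pow_zero // (leq_trans (ltn_ord j)) // leq_addl.
have YX : Ym N * Xm N = 1.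
  rewrite /Ym -mulrA (_ : Dinv N * Xm N = 1 - Lm N); last by rewrite /Lm opprB addrC subrK.
  by rewrite geom Lnil subr0.
have XY : Xm N * Ym N = 1.
  by move: YX; rewrite -!mulmxE => /mulmx1C.
have XN : Xm N * N = Em * Xm N.
  apply/matrixP => i j; rewrite !mulE.
  rewrite (_ : \sum_l Xm N i l * N l j = (N ^+ i.+1) 0 j); last first.
    by rewrite exprSr mulE; apply: eq_bigr => l _; rewrite /Xm mxE.
  case: (ltnP i m) => hi.
    have hi1 : (i.+1 < n)%N by rewrite ltnS.
    rewrite (bigD1 (Ordinal hi1)) //= big1 ?addr0.
      by rewrite /Em /Xm !mxE eqxx mul1r.
    move=> l hl; rewrite /Em mxE (_ : ((l : nat) == i.+1) = false) ?mul0r //.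
    by apply/negbTE; apply: contra hl => /eqP e; apply/eqP/val_inj.
  rewrite big1; first by rewrite pow_zero // add0n (leq_trans (ltn_ord j)) // ltnS.
  move=> l _; rewrite /Em mxE (_ : ((l : nat) == i.+1) = false) ?mul0r //.
  apply/negbTE; rewrite neq_ltn (leq_trans (ltn_ord l)) //.
split => //.
rewrite mulrDr mulrDl XN -!mulrA XY mulr1.
by rewrite mulrA -mulmxE mul_mx_scalar -scalemxAl mulmxE XY scalemx1.
Qed.

End Mx.

Section LB.
Variable R : realType.
Local Notation T := (R * R)%type.
Local Notation C := R[i].
Variable mu : {measure set T -> \bar R}.

Lemma goodM_scalar (s : T -> C) : Linf mu s -> goodM mu (fun x => (s x)%:M : 'M[C]_1).
Proof.
move=> hs i j; rewrite (_ : (fun x => _) = fun x => s x *+ (i == j)); last first.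
  by apply/funext => x; rewrite mxE.
case: (i == j); first by rewrite (_ : (fun x => _) = s) //; apply/funext => x; rewrite mulr1n.
by rewrite (_ : (fun x => _) = fun _ => 0); [exact: Linf_cst|apply/funext => x; rewrite mulr0n].
Qed.

Lemma scal_opE (s : T -> C) (F : vecfun R 1) :
  scal_op (Mul s) F = MO (fun x => (s x)%:M : 'M[C]_1) F.
Proof.
apply/funext => i; apply/funext => x; rewrite /scal_op /MO /opmx /Mul big_ord1.
by rewrite (ord1 i) mxE eqxx mulr1n.
Qed.

Lemma inv_lb (s : T -> C) : Linf mu s -> (mu setT < +oo)%E ->
  invertible_op mu (scal_op (Mul s)) ->
  exists c, 0 < c /\ {ae mu, forall x, c <= csq (s x)}.
Proof.
move=> hs hfin [Y [_ [Y1 Y2 Y3 [c0 hc0]] YX _]].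
set c1 := Num.max c0 1.
have c11 : 1 <= c1 by rewrite le_max lexx orbT.
have c01 : c0 <= c1 by rewrite le_max lexx.
set eps := (2 * c1)^-1.
have eps0 : 0 < eps by rewrite invr_gt0 mulr_gt0 // (lt_le_trans ltr01 c11).
have ce : c1 * eps = 2^-1.
  by rewrite /eps invfM mulrCA mulfV ?mulr1 // gt_eqF // (lt_le_trans ltr01 c11).
set S := [set x | csq (s x) < eps].
have mS : measurable S.
  have -> : S = (fun x => csq (s x)) @^-1` `]-oo, eps[.
    by apply/seteqP; split => x /=; rewrite in_itv /=.
  have := @mcsq R s (proj1 hs) measurableT _ (measurable_itv `]-oo, eps[).
  by rewrite setTI.
have SE : forall x, x \in S -> csq (s x) < eps.
  by move=> x /set_mem.
pose F : vecfun R 1 := fun _ x => Complex (\1_S x) 0.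
have vF : forall x, vsq F x = \1_S x.
  move=> x; rewrite /vsq big_ord1 /F /csq /= expr0n /= addr0 indicE.
  by case: (x \in S); rewrite ?expr1n ?expr0n.
have mF : forall i, cmeasurable (F i).
  move=> i; split; first exact: measurable_realfun.measurable_indic.
  exact: measurable_cst.
have IF : (\int[mu]_x (vsq F x)%:E = mu S)%E.
  under eq_integral do rewrite vF.
  by rewrite integral_indic // setIT.
have muSfin : (mu S < +oo)%E.
  by apply: le_lt_trans hfin; apply: le_measure; rewrite ?inE.
have L2F : L2vec mu F by split => //; rewrite IF.
pose G := scal_op (Mul s) F.
have hGM := MO_bounded (goodM_scalar hs).
have L2G : L2vec mu G.
  by rewrite /G scal_opE; case: hGM => H1 _ _ _; exact: H1.
have L2YG : L2vec mu (Y G) by exact: Y1.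
have h1 := hc0 _ L2G.
have h2 : (\int[mu]_x (vsq (Y G) x)%:E = \int[mu]_x (vsq F x)%:E)%E.
  apply: ae_eq_integral => //.
  - by apply/measurable_realfun.measurable_EFinP; apply: mvsq; exact: (proj1 L2YG).
  - by apply/measurable_realfun.measurable_EFinP; apply: mvsq; exact: (proj1 L2F).
  - apply: filterS (YX _ L2F) => x h _; rewrite /vsq; congr EFin.
    by apply: eq_bigr => i _; rewrite h.
have h3 : (\int[mu]_x (vsq G x)%:E <= eps%:E * \int[mu]_x (vsq F x)%:E)%E.
  apply: int_le => //; first exact: ltW.
    exact: (proj1 L2G).
  apply: aeW => x; rewrite vF /vsq big_ord1 /G /scal_op /Mul csqM.
  rewrite (_ : csq (F ord0 x) = \1_S x); last by rewrite -vF /vsq big_ord1.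
  rewrite indicE; case: (boolP (x \in S)) => hx.
    by rewrite !mulr1 ltW // SE.
  by rewrite !mulr0.
have muS0 : mu S = 0%E.
  have [r Er] : exists r, mu S = r%:E.
    exists (fine (mu S)); rewrite fineK // ge0_fin_numE //; exact: measure_ge0.
  have r0 : 0 <= r by rewrite -lee_fin -Er measure_ge0.
  move: h1; rewrite h2 IF Er => h1.
  have er0 : 0 <= eps * r by rewrite mulr_ge0 // ltW.
  have h4 : (c0%:E * \int[mu]_x (vsq G x)%:E <= (c1 * (eps * r))%:E)%E.
    case: (lerP 0 c0) => c0s.
      apply: (@le_trans _ _ (c0 * (eps * r))%:E); last by rewrite lee_fin ler_wpM2r.
      rewrite EFinM; apply: lee_wpmul2l; first by rewrite lee_fin.
      by rewrite EFinM -Er -IF.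
    apply: (@le_trans _ _ 0%E).
      rewrite mule_le0_ge0 ?lee_fin ?(ltW c0s) //.
      apply: integral_ge0 => x _; by rewrite lee_fin vsq_ge0.
    by rewrite lee_fin mulr_ge0 // (le_trans ler01 c11).
  have h5 := le_trans h1 h4; rewrite lee_fin in h5.
  have h7 : c1 * (eps * r) = r / 2 by rewrite mulrA ce mulrC.
  have : r = 0 by lra.
  by move=> ->.
exists eps; split => //.
exists S; split => // x /= hx.
by rewrite /S /= ltNge; apply/negP.
Qed.

End LB.

Lemma csq_prod (R : realType) (I : Type) (r : seq I) (z : I -> R[i]) :
  csq (\prod_(i <- r) z i) = \prod_(i <- r) csq (z i).
Proof.
elim: r => [|a r IH]; first by rewrite !big_nil csq1.
by rewrite !big_cons csqM IH.
Qed.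

Theorem lemma2p4 (R : realType) (n : nat) (hn : (1 <= n)%N)
  (mu : {measure set (R * R)%type -> \bar R})
  (K : set (R * R)%type) (hK : compact K) (hsupp : mu (~` K) = 0%E)
  (hfin : (mu setT < +oo)%E) (hreg : regular_measure mu)
  (phi : (R * R)%type -> R[i]) (phis : 'I_n -> 'I_n -> (R * R)%type -> R[i])
  (hphi : Linf mu phi)
  (hphis : forall i j : 'I_n, (i < j)%N -> Linf mu (phis i j))
  (hsi : {ae mu, forall l, strongly_irreducible (fibre phi phis l)})
  (hinv : forall i j : 'I_n, (j = i.+1 :> nat) ->
            invertible_op mu (scal_op (Mul (phis i j)))) :
  exists X Y : vecfun R n -> vecfun R n,
    is_inverse_op mu X Y /\
    forall G, L2vec mu G -> aeeq mu (X (Aop phi phis (Y G))) (Jop phi G).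
Proof.
case: n hn phis hphis hsi hinv => [//|m] _ phis hphis _ hinv.
pose Nf x : 'M[R[i]]_m.+1 := \matrix_(i, j) (if (i < j)%N then phis i j x else 0).
have suppN : forall x, supp (Nf x).
  by move=> x i j hij; rewrite mxE ltnNge hij.
have hlb : forall i : 'I_m.+1, exists c : R, 0 < c /\
    {ae mu, forall x, (i < m)%N -> c <= csq (phis i (inord i.+1) x)}.
  move=> i; case: (ltnP i m) => him.
    have hij : (nat_of_ord i < nat_of_ord (inord i.+1 : 'I_m.+1))%N by rewrite inordK ?ltnS.
    have [c [c0 hc]] := inv_lb (hphis _ _ hij) hfin (hinv _ _ (inordK (him : (i.+1 < m.+1)%N))).
    by exists c; split => //; apply: filterS hc => x h _; exact: h.
  by exists 1; split => //; apply: aeW => x h.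
have [cf hcf] := boolp.choice hlb.
have cpos : forall i, 0 < cf i by move=> i; case: (hcf i).
have hae : {ae mu, forall x, forall i : 'I_m.+1, (i < m)%N -> cf i <= csq (phis i (inord i.+1) x)}.
  by apply: ae_forall_fin => i; case: (hcf i).
have nz : forall x, (forall i : 'I_m.+1, (i < m)%N -> cf i <= csq (phis i (inord i.+1) x)) ->
    forall i : 'I_m.+1, (i < m)%N -> Nf x i (inord i.+1) != 0.
  move=> x hx i hi; rewrite mxE inordK ?ltnS // leqnn; apply/eqP => e.
  have := hx i hi; rewrite e csq0 => h.
  by move: (lt_le_trans (cpos i) h); rewrite ltxx.
have gN : goodM mu Nf.
  move=> i j; rewrite (_ : (fun x => _) = fun x => if (i < j)%N then phis i j x else 0); last first.
    by apply/funext => x; rewrite mxE.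
  case: (boolP (i < j)%N) => h; [exact: hphis|exact: Linf_cst].
have gX : goodM mu (fun x => Xm (Nf x)).
  move=> i j; rewrite (_ : (fun x => _) = fun x => (Nf x ^+ i) 0 j); last first.
    by apply/funext => x; rewrite /Xm mxE.
  exact: (goodM_exp i gN).
have gD : goodM mu (fun x => Dinv (Nf x)).
  move=> i j; rewrite (_ : (fun x => _) = fun x => (dg (Nf x) i)^-1 *+ (i == j)); last first.
    by apply/funext => x; rewrite /Dinv !mxE.
  case: (i == j); last first.
    by rewrite (_ : (fun x => _) = fun _ => 0); [exact: Linf_cst|apply/funext => x; rewrite mulr0n].
  rewrite (_ : (fun x => _) = fun x => (dg (Nf x) i)^-1); last by apply/funext => x; rewrite mulr1n.
  apply: (Linf_inv R mu (fun x => dg (Nf x) i) (\prod_(l < i) cf (inord l))).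
  - exact: (gX i i).
  - by apply: prodr_gt0 => l _.
  - apply: filterS hae => x hx.
    rewrite /dg /Xm mxE (pow_diag (suppN x) (i := 0)) //= csq_prod.
    apply: ler_prod => l _; apply/andP; split; first exact: ltW.
    have hl : (l < m)%N by apply: leq_trans (ltn_ord l) _; rewrite -ltnS.
    have := hx (inord l); rewrite inordK; last by rewrite ltnS ltnW.
    move=> /(_ hl).
    have e1 : nat_of_ord (inord l : 'I_m.+1) = l by rewrite inordK // ltnS ltnW.
    have e2 : nat_of_ord (inord l.+1 : 'I_m.+1) = l.+1 by rewrite inordK.
    by rewrite add0n mxE e1 e2 ltnSn.
have gL : goodM mu (fun x => Lm (Nf x)).
  rewrite (_ : (fun x => _) = fun x => 1%:M + - (Dinv (Nf x) *m Xm (Nf x))); last first.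
    by apply/funext => x; rewrite /Lm mulmxE.
  apply: goodM_add; first exact: goodM_cst.
  by apply: goodM_opp; apply: goodM_mul.
have gY : goodM mu (fun x => Ym (Nf x)).
  rewrite (_ : (fun x => _) = fun x => (\sum_(k < m.+1) Lm (Nf x) ^+ k) *m Dinv (Nf x)); last first.
    by apply/funext => x; rewrite /Ym mulmxE.
  apply: goodM_mul => //; apply: goodM_sum => k; exact: goodM_exp.
have halg : {ae mu, forall x, Xm (Nf x) * Ym (Nf x) = 1 /\
    Xm (Nf x) * ((phi x)%:M + Nf x) * Ym (Nf x) = (phi x)%:M + Em _ _}.
  by apply: filterS hae => x hx; exact: main_alg (suppN x) (nz x hx) (phi x).
have AopE : forall G, Aop phi phis G = MO (fun x => (phi x)%:M + Nf x) G.
  move=> G; apply/funext => i; apply/funext => x; rewrite /Aop /MO /opmx.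
  apply: eq_bigr => j _; rewrite /Mul /Zop /= !mxE.
  case: eqP => [<-|hij] /=; first by rewrite ltnn mulr1n addr0.
  rewrite mulr0n add0r; case: ifP => _ /=; by rewrite ?mul0r.
have JopE : forall G : vecfun R m.+1, Jop phi G = MO (fun x => (phi x)%:M + Em _ m) G.
  move=> G; apply/funext => i; apply/funext => x; rewrite /Jop /MO /opmx.
  apply: eq_bigr => j _; rewrite /Mul /Iop /Zop /= !mxE.
  case: eqP => [<-|hij] /=; first by rewrite ltn_eqF // mulr1n addr0.
  rewrite mulr0n add0r; case: ifP => _ /=; by rewrite ?mul0r ?mul1r.
exists (MO (fun x => Xm (Nf x))), (MO (fun x => Ym (Nf x))).
split.
  split.
  - exact: MO_bounded gX.
  - exact: MO_bounded gY.
  - move=> F _; rewrite MO_comp -[X in aeeq _ _ X]MO_1; apply: MO_ae.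
    apply: filterS halg => x [h _].
    by move: h; rewrite -!mulmxE => /mulmx1C.
  - move=> F _; rewrite MO_comp -[X in aeeq _ _ X]MO_1; apply: MO_ae.
    apply: filterS halg => x [h _].
    by move: h; rewrite -!mulmxE.
move=> G _; rewrite AopE !MO_comp JopE; apply: MO_ae.
by apply: filterS halg => x [_ h]; rewrite -h !mulmxE.
Qed.
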